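(* Let $n\ge2$ be an integer. No configuration of $\Omega_n$ contains the tile $j_n^{1,1,1,1}$ at a position $\mathbf m$ together with the tile $\hat g_n^{\,n}$ at position $\mathbf m-\mathbf e_2$ (directly below it), and no configuration of $\Omega_n$ contains the tile $j_n^{0,1,1,1}$ at a position $\mathbf m$ together with the tile $\hat g_n^{\,n-1}$ at position $\mathbf m-\mathbf e_2$.
   Context: $V_n=\{(v_0,v_1,v_2)\in\mathbb{Z}^3: 0\le v_0\le v_1\le 1,\ v_1\le v_2\le n+1\}$, elements written as words $v_0v_1v_2$. A Wang tile is $t=(a,b,c,d)$ with $\mathrm{RIGHT}(t)=a$, $\mathrm{TOP}(t)=b$, $\mathrm{LEFT}(t)=c$, $\mathrm{BOTTOM}(t)=d$; $\hat t=(b,a,d,c)$, $\hat S=\{\hat t:t\in S\}$. Define (as (right, top, left, bottom)): $W_n=\{(11(i+1),11(j+1),11i,11j):1\le i,j\le n\}$; $b_n^i=(00(i+1),111,00i,11n)$, $B_n=\{b_n^i:0\le i\le n-1\}$; $g_n^i=(01(i+1),111,00i,11(n+1))$, $G_n=\{g_n^i:0\le i\le n\}$; $y_n^i=(01(i+1),112,01i,11(n+1))$, $Y_n=\{y_n^i:1\le i\le n\}$; $j_n^{k,l,r,s}=((0,k,l),(0,r,s),(0,s,r+n),(0,l,k+n))$ for $(k,l),(r,s)\in\{(0,0),(0,1),(1,1)\}$; $J_n$ = these 9 tiles minus $j_n^{0,0,1,1},j_n^{1,1,0,0}$. $\mathcal{T}_n=W_n\cup B_n\cup G_n\cup Y_n\cup\hat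 B_n\cup\hat G_n\cup\hat Y_n\cup J_n$; $\Omega_n$ is the set of configurations $x:\mathbb{Z}^2\to\mathcal T_n$ with $\mathrm{RIGHT}(x(\mathbf m))=\mathrm{LEFT}(x(\mathbf m+\mathbf e_1))$ and $\mathrm{TOP}(x(\mathbf m))=\mathrm{BOTTOM}(x(\mathbf m+\mathbf e_2))$ for all $\mathbf m$. *)

(* Defs.v *)
From Stdlib Require Import ZArith Arith Lia.

(* A colour v0 v1 v2 (an element of V_n; all colours used below lie in V_n). *)
Definition color : Type := (nat * nat * nat)%type.

(* A Wang tile t = (a,b,c,d) = (RIGHT, TOP, LEFT, BOTTOM). *)
Record tile : Type := Tile { RIGHT : color; TOP : color; LEFT : color; BOTTOM : color }.

Definition hat (t : tile) : tile := Tile (TOP t) (RIGHT t) (BOTTOM t) (LEFT t).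

Definition w_tile (n i j : nat) : tile :=
  Tile (1,1,i+1) (1,1,j+1) (1,1,i) (1,1,j).
Definition b_tile (n i : nat) : tile :=
  Tile (0,0,i+1) (1,1,1) (0,0,i) (1,1,n).
Definition g_tile (n i : nat) : tile :=
  Tile (0,1,i+1) (1,1,1) (0,0,i) (1,1,n+1).
Definition y_tile (n i : nat) : tile :=
  Tile (0,1,i+1) (1,1,2) (0,1,i) (1,1,n+1).
Definition j_tile (n k l r s : nat) : tile :=
  Tile (0,k,l) (0,r,s) (0,s,r+n) (0,l,k+n).

Definition in_W (n : nat) (t : tile) : Prop :=
  exists i j, 1 <= i <= n /\ 1 <= j <= n /\ t = w_tile n i j.
Definition in_B (n : nat) (t : tile) : Prop :=
  exists i, i <= n - 1 /\ t = b_tile n i.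
Definition in_G (n : nat) (t : tile) : Prop :=
  exists i, i <= n /\ t = g_tile n i.
Definition in_Y (n : nat) (t : tile) : Prop :=
  exists i, 1 <= i <= n /\ t = y_tile n i.

Definition adm_pair (k l : nat) : Prop :=
  (k = 0 /\ l = 0) \/ (k = 0 /\ l = 1) \/ (k = 1 /\ l = 1).

Definition in_J (n : nat) (t : tile) : Prop :=
  exists k l r s, adm_pair k l /\ adm_pair r s /\
    ~ (k = 0 /\ l = 0 /\ r = 1 /\ s = 1) /\
    ~ (k = 1 /\ l = 1 /\ r = 0 /\ s = 0) /\
    t = j_tile n k l r s.

Definition in_T (n : nat) (t : tile) : Prop :=
  in_W n t \/ in_B n t \/ in_G n t \/ in_Y n t \/
  (exists u, in_B n u /\ t = hat u) \/
  (exists u, in_G n u /\ t = hat u) \/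
  (exists u, in_Y n u /\ t = hat u) \/
  in_J n t.

Definition in_Omega (n : nat) (x : Z * Z -> tile) : Prop :=
  forall a b : Z,
    in_T n (x (a, b)) /\
    RIGHT (x (a, b)) = LEFT (x ((a + 1)%Z, b)) /\
    TOP (x (a, b)) = BOTTOM (x (a, (b + 1)%Z)).

(* Main.v *)
Require Import Defs.
From Stdlib Require Import ZArith Arith Lia List Bool.
Import ListNotations.

Ltac inj_all := repeat match goal with H : (_, _) = (_, _) |- _ => injection H; clear H; intros end.

Ltac dT H :=
  destruct H as [(i&j&Hi&Hj&->)|[(i&Hi&->)|[(i&Hi&->)|[(i&Hi&->)|[(u&(i&Hi&->)&->)|[(u&(i&Hi&->)&->)|[(u&(i&Hi&->)&->)|(k&l&r&s&Hkl&Hrs&Hx1&Hx2&->)]]]]]]];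
  [ | | | | | | | destruct Hkl as [[-> ->]|[[-> ->]|[-> ->]]]; destruct Hrs as [[-> ->]|[[-> ->]|[-> ->]]] ];
  cbn in *.

Lemma teq (a b c d e f : nat) : a = d -> b = e -> c = f -> (a,b,c) = (d,e,f).
Proof. intros -> -> ->; reflexivity. Qed.

Ltac fin := intros; repeat match goal with H : _ \/ _ |- _ => destruct H end; inj_all;
  try (exfalso; lia); try tauto;
  first [ solve [left; apply teq; lia] | solve [right; apply teq; lia] | solve [apply teq; lia]
        | solve [split; [apply teq; lia | lia]] | lia ].

Section S.
Variable n : nat.
Hypothesis hn : 2 <= n.

Lemma L_r111 t : in_T n t -> RIGHT t = (1,1,1) -> fst (fst (TOP t)) = 0.
Proof. intro H; dT H; fin. Qed.

Lemma L_r112 t : in_T n t -> RIGHT t = (1,1,2) -> fst (fst (BOTTOM t)) = 0 -> fst (fst (TOP t)) = 0.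
Proof. intro H; dT H; fin. Qed.

Lemma L_r0c2 t : in_T n t -> (RIGHT t = (0,0,2) \/ RIGHT t = (0,1,2)) -> fst (fst (BOTTOM t)) = 1.
Proof. intro H; dT H; fin. Qed.

Lemma S0 t v : in_T n t -> (RIGHT t = (0,0,v+1) \/ RIGHT t = (0,1,v+1)) -> 1 <= v ->
  LEFT t = (0,0,v) \/ LEFT t = (0,1,v).
Proof. intro H; dT H; fin. Qed.

Lemma S1 t v : in_T n t -> RIGHT t = (1,1,v+1) -> 2 <= v -> LEFT t = (1,1,v) /\ fst (fst (BOTTOM t)) = 1.
Proof. intro H; dT H; fin. Qed.

Lemma S2 t v : in_T n t -> RIGHT t = (1,1,v+1) -> fst (fst (TOP t)) = 1 -> LEFT t = (1,1,v).
Proof. intro H; dT H; fin. Qed.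

Lemma E t v : in_T n t -> TOP t = (0,0,v) -> 2 <= v -> LEFT t = (1,1,n).
Proof. intro H; dT H; fin. Qed.
End S.

Lemma col_inv n x (hn: 2<=n) (Hx: in_Omega n x) : forall k a b,
  (LEFT (x (a,b)) = (0,0,k+2) \/ LEFT (x (a,b)) = (0,1,k+2)) ->
  LEFT (x (a,(b-1)%Z)) = (1,1,k+2) -> LEFT (x (a,(b-2)%Z)) = (1,1,k+1) -> False.
Proof.
  induction k; intros a b H0 H1 H2.
  - destruct (Hx (a-1)%Z b) as (T0&R0&_). rewrite Z.sub_add in R0.
    destruct (Hx (a-1)%Z (b-1)%Z) as (T1&R1&U1). rewrite Z.sub_add in R1, U1.
    destruct (Hx (a-1)%Z (b-2)%Z) as (T2&R2&U2). rewrite Z.sub_add in R2.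
    replace (b-2+1)%Z with (b-1)%Z in U2 by lia.
    rewrite H2 in R2. rewrite H1 in R1. rewrite <- R0 in H0.
    pose proof (L_r111 n hn _ T2 R2) as F2. rewrite U2 in F2.
    pose proof (L_r112 n hn _ T1 R1 F2) as F1. rewrite U1 in F1.
    pose proof (L_r0c2 n hn _ T0 H0) as F0. lia.
  - destruct (Hx (a-1)%Z b) as (T0&R0&_). rewrite Z.sub_add in R0.
    destruct (Hx (a-1)%Z (b-1)%Z) as (T1&R1&U1). rewrite Z.sub_add in R1, U1.
    destruct (Hx (a-1)%Z (b-2)%Z) as (T2&R2&U2). rewrite Z.sub_add in R2.
    replace (b-2+1)%Z with (b-1)%Z in U2 by lia.
    replace (S k + 2) with (k+2+1) in * by lia.
    replace (S k + 1) with (k+1+1) in * by lia.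
    rewrite H2 in R2. rewrite H1 in R1. rewrite <- R0 in H0.
    destruct (S1 n hn _ _ T1 R1 ltac:(lia)) as [L1 B1].
    rewrite <- U2 in B1.
    pose proof (S2 n hn _ _ T2 R2 B1) as L2.
    pose proof (S0 n hn _ _ T0 H0 ltac:(lia)) as L0.
    apply (IHk (a-1)%Z b L0 L1). replace (k+1) with (k+2-1) in L2 by lia.
    replace (k+2-1) with (k+1) in L2 by lia. exact L2.
Qed.

Lemma gen_case n x (hn: 2<=n) (Hx: in_Omega n x) a b v :
  LEFT (x (a,b)) = (0,1,n+1) -> LEFT (x (a,(b-1)%Z)) = (1,1,n+1) ->
  BOTTOM (x (a,(b-1)%Z)) = (0,0,v) -> 2 <= v -> False.
Proof.
  intros H0 H1 H2 Hv.
  destruct (Hx a (b-2)%Z) as (T2&_&U2). replace (b-2+1)%Z with (b-1)%Z in U2 by lia.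
  rewrite H2 in U2. pose proof (E n hn _ _ T2 U2 Hv) as L2.
  apply (col_inv n x hn Hx (n-1) a b).
  - right. rewrite H0. apply teq; lia.
  - rewrite H1. apply teq; lia.
  - rewrite L2. apply teq; lia.
Qed.

Definition ceq (c d : color) : bool :=
  let '(a1,b1,c1) := c in let '(a2,b2,c2) := d in
  Nat.eqb a1 a2 && Nat.eqb b1 b2 && Nat.eqb c1 c2.

Lemma ceq_refl c : ceq c c = true.
Proof. destruct c as [[a b] c]; simpl; rewrite !Nat.eqb_refl; reflexivity. Qed.

Definition tl2 : list tile :=
  [w_tile 2 1 1; w_tile 2 1 2; w_tile 2 2 1; w_tile 2 2 2;
   b_tile 2 0; b_tile 2 1; g_tile 2 0; g_tile 2 1; g_tile 2 2; y_tile 2 1; y_tile 2 2;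
   hat (b_tile 2 0); hat (b_tile 2 1); hat (g_tile 2 0); hat (g_tile 2 1); hat (g_tile 2 2);
   hat (y_tile 2 1); hat (y_tile 2 2);
   j_tile 2 0 0 0 0; j_tile 2 0 0 0 1; j_tile 2 0 1 0 0; j_tile 2 0 1 0 1; j_tile 2 0 1 1 1;
   j_tile 2 1 1 0 1; j_tile 2 1 1 1 1].

Lemma in_T2 t : in_T 2 t -> In t tl2.
Proof.
  intro H.
  destruct H as [(i&j&Hi&Hj&->)|[(i&Hi&->)|[(i&Hi&->)|[(i&Hi&->)|[(u&(i&Hi&->)&->)|[(u&(i&Hi&->)&->)|[(u&(i&Hi&->)&->)|(k&l&r&s&Hkl&Hrs&Hx1&Hx2&->)]]]]]]].
  - assert (i = 1 \/ i = 2) as [-> | ->] by lia; assert (j = 1 \/ j = 2) as [-> | ->] by lia;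
      simpl; tauto.
  - assert (i = 0 \/ i = 1) as [-> | ->] by lia; simpl; tauto.
  - assert (i = 0 \/ i = 1 \/ i = 2) as [-> | [-> | ->]] by lia; simpl; tauto.
  - assert (i = 1 \/ i = 2) as [-> | ->] by lia; simpl; tauto.
  - assert (i = 0 \/ i = 1) as [-> | ->] by lia; simpl; tauto.
  - assert (i = 0 \/ i = 1 \/ i = 2) as [-> | [-> | ->]] by lia; simpl; tauto.
  - assert (i = 1 \/ i = 2) as [-> | ->] by lia; simpl; tauto.
  - destruct Hkl as [[-> ->]|[[-> ->]|[-> ->]]]; destruct Hrs as [[-> ->]|[[-> ->]|[-> ->]]];
      simpl; tauto.
Qed.

Definition NC := 12.
Definition NR := 7.
Definition dom := list (list (list tile)).
Definition get (D : dom) (c r : nat) : list tile := nth r (nth c D []) [].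

Definition okt (D : dom) (c r : nat) (t : tile) : bool :=
  (if c + 1 <? NC then existsb (fun u => ceq (RIGHT t) (LEFT u)) (get D (c+1) r) else true) &&
  (match c with 0 => true | S c' => existsb (fun u => ceq (LEFT t) (RIGHT u)) (get D c' r) end) &&
  (if r + 1 <? NR then existsb (fun u => ceq (TOP t) (BOTTOM u)) (get D c (r+1)) else true) &&
  (match r with 0 => true | S r' => existsb (fun u => ceq (BOTTOM t) (TOP u)) (get D c r') end).

Definition mk (f : nat -> nat -> list tile) : dom :=
  map (fun c => map (fun r => f c r) (seq 0 NR)) (seq 0 NC).

Definition step (D : dom) : dom := mk (fun c r => filter (okt D c r) (get D c r)).

Definition init : dom := mk (fun c r =>
  if (c =? 7) && (r =? 4) then [j_tile 2 0 1 1 1]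
  else if (c =? 7) && (r =? 3) then [hat (g_tile 2 1)] else tl2).

Lemma nth_map_seq {A} (f : nat -> A) m k d : k < m -> nth k (map f (seq 0 m)) d = f k.
Proof.
  intro Hk. rewrite nth_indep with (d' := f 0) by (rewrite length_map, length_seq; lia).
  rewrite map_nth, seq_nth by lia. reflexivity.
Qed.

Lemma get_mk f c r : c < NC -> r < NR -> get (mk f) c r = f c r.
Proof. intros Hc Hr. unfold get, mk. rewrite nth_map_seq by lia. rewrite nth_map_seq by lia. reflexivity. Qed.

Section Refl.
Variable x : Z * Z -> tile.
Hypothesis Hx : in_Omega 2 x.
Variables a b : Z.

Definition pos (c r : nat) : Z * Z := (a + Z.of_nat c - 7, b + Z.of_nat r - 4)%Z.

Definition Good (D : dom) := forall c r, c < NC -> r < NR -> In (x (pos c r)) (get D c r).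

Lemma ex_in (f : tile -> bool) l t : In t l -> f t = true -> existsb f l = true.
Proof. intros. apply existsb_exists. eauto. Qed.

Lemma step_good D : Good D -> Good (step D).
Proof.
  intros G c r Hc Hr. unfold step. rewrite get_mk by auto.
  apply filter_In. split; [apply G; auto|].
  unfold okt. destruct (Hx (fst (pos c r)) (snd (pos c r))) as (_&HR&HU).
  rewrite <- surjective_pairing in HR, HU.
  apply andb_true_intro; split; [apply andb_true_intro; split; [apply andb_true_intro; split|]|].
  - destruct (c + 1 <? NC) eqn:E; [|reflexivity]. apply Nat.ltb_lt in E.
    apply (ex_in _ _ (x (pos (c+1) r))); [apply G; auto|].
    replace (pos (c+1) r) with ((fst (pos c r) + 1)%Z, snd (pos c r)).
    + rewrite HR; apply ceq_refl.
    + unfold pos; simpl; f_equal; lia.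
  - destruct c as [|c']; [reflexivity|].
    apply (ex_in _ _ (x (pos c' r))); [apply G; lia|].
    destruct (Hx (fst (pos c' r)) (snd (pos c' r))) as (_&HR'&_).
    rewrite <- surjective_pairing in HR'.
    replace ((fst (pos c' r) + 1)%Z, snd (pos c' r)) with (pos (S c') r) in HR'.
    + rewrite HR'; apply ceq_refl.
    + unfold pos; simpl; f_equal; lia.
  - destruct (r + 1 <? NR) eqn:E; [|reflexivity]. apply Nat.ltb_lt in E.
    apply (ex_in _ _ (x (pos c (r+1)))); [apply G; auto|].
    replace (pos c (r+1)) with (fst (pos c r), (snd (pos c r) + 1)%Z).
    + rewrite HU; apply ceq_refl.
    + unfold pos; simpl; f_equal; lia.
  - destruct r as [|r']; [reflexivity|].
    apply (ex_in _ _ (x (pos c r'))); [apply G; lia|].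
    destruct (Hx (fst (pos c r')) (snd (pos c r'))) as (_&_&HU').
    rewrite <- surjective_pairing in HU'.
    replace (fst (pos c r'), (snd (pos c r') + 1)%Z) with (pos c (S r')) in HU'.
    + rewrite HU'; apply ceq_refl.
    + unfold pos; simpl; f_equal; lia.
Qed.

Lemma iter_good k D : Good D -> Good (Nat.iter k step D).
Proof. induction k; simpl; auto using step_good. Qed.

Definition has_empty (D : dom) : bool :=
  existsb (fun c => existsb (fun r => match get D c r with [] => true | _ => false end) (seq 0 NR)) (seq 0 NC).

Lemma good_no_empty D : Good D -> has_empty D = false.
Proof.
  intro G. unfold has_empty. apply not_true_is_false. intro H.
  apply existsb_exists in H as (c&Hc&H). apply existsb_exists in H as (r&Hr&H).
  apply in_seq in Hc, Hr.
  pose proof (G c r ltac:(lia) ltac:(lia)) as Hin.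
  destruct (get D c r); [contradiction | discriminate].
Qed.

Lemma init_good : x (a,b) = j_tile 2 0 1 1 1 -> x (a,(b-1)%Z) = hat (g_tile 2 1) -> Good init.
Proof.
  intros H1 H2 c r Hc Hr. unfold init. rewrite get_mk by auto.
  destruct ((c =? 7) && (r =? 4)) eqn:E1.
  - apply andb_true_iff in E1 as [E1 E2]. apply Nat.eqb_eq in E1, E2. subst.
    replace (pos 7 4) with (a,b) by (unfold pos; f_equal; lia). rewrite H1; simpl; auto.
  - destruct ((c =? 7) && (r =? 3)) eqn:E3.
    + apply andb_true_iff in E3 as [E1' E2]. apply Nat.eqb_eq in E1', E2. subst.
      replace (pos 7 3) with (a,(b-1)%Z) by (unfold pos; f_equal; lia). rewrite H2; simpl; auto.
    + apply in_T2. destruct (Hx (fst (pos c r)) (snd (pos c r))) as (T&_).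
      rewrite <- surjective_pairing in T. exact T.
Qed.

Lemma check : has_empty (Nat.iter 17 step init) = true.
Proof. vm_compute. reflexivity. Qed.

Lemma n2_case2 : ~ (x (a,b) = j_tile 2 0 1 1 1 /\ x (a,(b-1)%Z) = hat (g_tile 2 1)).
Proof.
  intros [H1 H2]. pose proof (good_no_empty _ (iter_good 17 _ (init_good H1 H2))) as H.
  rewrite check in H. discriminate.
Qed.
End Refl.

Theorem lemma10p7 (n : nat) (hn : 2 <= n) :
  forall x : Z * Z -> tile, in_Omega n x ->
  forall a b : Z,
    ~ (x (a, b) = j_tile n 1 1 1 1 /\ x (a, (b - 1)%Z) = hat (g_tile n n)) /\
    ~ (x (a, b) = j_tile n 0 1 1 1 /\ x (a, (b - 1)%Z) = hat (g_tile n (n - 1))).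
Proof.
  intros x Hx a b. split.
  - intros [H1 H2]. apply (gen_case n x hn Hx a b n).
    + rewrite H1; simpl; apply teq; lia.
    + rewrite H2; simpl; apply teq; lia.
    + rewrite H2; reflexivity.
    + lia.
  - intros [H1 H2]. destruct (Nat.eq_dec n 2) as [->|Hn].
    + exact (n2_case2 x Hx a b (conj H1 H2)).
    + apply (gen_case n x hn Hx a b (n-1)).
      * rewrite H1; simpl; apply teq; lia.
      * rewrite H2; simpl; apply teq; lia.
      * rewrite H2; reflexivity.
      * lia.
Qed.
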